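(* Let $n$ be a positive integer and $p$ an odd prime. Let $S \subseteq \mathbb{Z}_n$ with $0 \notin S$, $S = -S$, $|S| = p-1$, such that the circulant graph $\mathrm{Cay}(\mathbb{Z}_n, S)$ is connected. Then $\mathrm{Cay}(\mathbb{Z}_n, S)$ admits a perfect code if and only if $p$ divides $n$ and $s \not\equiv s' \pmod p$ for all distinct $s, s' \in S \cup \{0\}$.
   Context: $\mathbb{Z}_n$ is the additive group of integers modulo $n$; elements are identified with integers in $\{0,1,\dots,n-1\}$ when reducing modulo $p$. For an inverse-closed subset $S$ of $\mathbb{Z}_n$ not containing $0$, the circulant graph $\mathrm{Cay}(\mathbb{Z}_n,S)$ has vertex set $\mathbb{Z}_n$, with $u,v$ adjacent iff $v-u \in S$; its degree is $|S|$. A perfect code in a graph $\Gamma=(V,E)$ is a subset $C \subseteq V$ that is an independent set such that every vertex of $V\setminus C$ is adjacent to exactly one vertex of $C$ (equivalently, the closed neighbourhoods of vertices of $C$ partition $V$). *)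

(* Defs.v *)
(* Z_n is modelled by the ordinal type 'I_n (n > 0),
   with arithmetic modulo n performed on the underlying naturals. *)
From mathcomp Require Import all_boot.
Set Implicit Arguments. Unset Strict Implicit. Unset Printing Implicit Defensive.

Definition zdiff (n : nat) (v u : 'I_n) : nat := (v + (n - u)) %% n.

Definition connection_set (n : nat) (S : {set 'I_n}) : Prop :=
  (forall s, s \in S -> val s != 0) /\
  (forall s, s \in S -> exists2 t, t \in S & val t = (n - s) %% n).

Definition circ_adj (n : nat) (S : {set 'I_n}) : rel 'I_n :=
  fun u v => [exists s in S, val s == zdiff v u].

Definition circ_connected (n : nat) (S : {set 'I_n}) : Prop :=
  forall u v : 'I_n, connect (circ_adj S) u v.

Definition perfect_code (n : nat) (S : {set 'I_n}) (C : {set 'I_n}) : Prop :=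
  (forall c c', c \in C -> c' \in C -> ~~ circ_adj S c c') /\
  (forall v, v \notin C -> #|[set c in C | circ_adj S v c]| = 1).

(* Main.v *)
Require Import Defs.
From mathcomp Require Import all_boot.
From mathcomp Require Import all_order all_algebra all_field.
Import GRing.Theory Num.Theory.

Section Aux.
Local Open Scope ring_scope.

Lemma big_blocks (R : Type) (idx : R) (op : Monoid.com_law idx) (F : nat -> R) (a b : nat) :
  \big[op/idx]_(0 <= j < a * b) F j =
  \big[op/idx]_(0 <= l < a) \big[op/idx]_(0 <= r < b) F (l * b + r)%N.
Proof.
elim: a => [|a IH]; first by rewrite mul0n !big_geq.
rewrite mulSnr big_nat_recr //= -IH (big_cat_nat (leq0n _) (leq_addr b (a*b))).
congr (op _ _).
rewrite -{1}[(a * b)%N]add0n big_addn addKn; apply: eq_bigr => i _; by rewrite addnC.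
Qed.

Lemma geom0 (R : idomainType) (u : R) n : u ^+ n = 1 -> u != 1 -> \sum_(i < n) u ^+ i = 0.
Proof.
move=> un u1; have := subrX1 u n; rewrite un subrr => /esym /eqP.
by rewrite mulf_eq0 subr_eq0 (negbTE u1) /= => /eqP.
Qed.

Lemma vanish (p k : nat) (c : nat -> nat) (w : algC) :
  prime p -> (p ^ k.+1).-primitive_root w ->
  \sum_(0 <= j < p ^ k.+1) (c j)%:R * w ^+ j = 0 ->
  forall j, (j < p ^ k.+1)%N -> c j = c (j %% p ^ k)%N.
Proof.
move=> pr_p prim_w hsum.
set M := (p ^ k)%N.
have M_gt0 : (0 < M)%N by rewrite expn_gt0 prime_gt0.
have p_gt0 := prime_gt0 pr_p.
have em : (p ^ k.+1 = p * M)%N by rewrite expnS.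
set q := (p.-1 * M)%N.
have pM : (p * M = q + M)%N by rewrite /q addnC -mulSn prednK.
pose g j := (c (j %% M + q)%N)%:R * w ^+ j : algC.
have prim_u : p.-primitive_root (w ^+ M).
  have hp : (p %| p ^ k.+1)%N by rewrite em dvdn_mulr.
  have := dvdn_prim_root prim_w hp.
  by rewrite em mulKn.
have sum_u : \sum_(i < p) (w ^+ M) ^+ i = 0.
  apply: geom0; first exact: prim_expr_order prim_u.
  apply/negP => /eqP h; have := prim_order_dvd prim_u 1.
  by rewrite expr1 h eqxx dvdn1 => /eqP p1; rewrite p1 in pr_p.
have hg : \sum_(0 <= j < p * M) g j = 0.
  rewrite big_blocks.
  transitivity (\sum_(0 <= l < p) \sum_(0 <= r < M) (c (r + q)%N)%:R * w ^+ r * (w ^+ M) ^+ l).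
    apply: eq_bigr => l _; apply: eq_big_nat => r /andP[_ hr].
    rewrite /g modnMDl (modn_small hr) exprD -exprM.
    by rewrite [(M * l)%N]mulnC (mulrC (w ^+ (l * M))) mulrA.
  rewrite exchange_big /=; apply: big1 => r _.
  by rewrite -mulr_sumr big_mkord sum_u mulr0.
pose E : {poly rat} := \poly_(j < q) ((c j)%:R - (c (j %% M + q)%N)%:R).
have Ew : (map_poly (@ratr algC) E).[w] = 0.
  rewrite (horner_coef_wide _ (_ : size _ <= q)%N); last first.
    by rewrite size_map_poly size_poly.
  transitivity (\sum_(i < q) (c i)%:R * w ^+ i - \sum_(i < q) g i).
    rewrite -sumrB; apply: eq_bigr => i _.
    by rewrite coef_map coef_poly ltn_ord raddfB /= !ratr_nat mulrBl.
  move: hsum hg; rewrite em pM !(big_cat_nat (leq0n q) (leq_addr M q)) /=.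
  rewrite !big_mkord.
  have -> : \sum_(q <= i < q + M) g i = \sum_(q <= i < q + M) (c i)%:R * w ^+ i.
    apply: eq_big_nat => i /andP[h1 h2]; rewrite /g.
    have hi : (i - q < M)%N by rewrite ltn_subLR.
    have e : (i %% M = i - q)%N.
      by rewrite -{1}(subnK h1) /q addnC modnMDl modn_small.
    by rewrite e subnK.
  move=> h1 h2; apply/eqP; rewrite subr_eq0; apply/eqP.
  by apply: (@addIr _ (\sum_(q <= i < q + M) (c i)%:R * w ^+ i)); rewrite h1 h2.
have E0 : E = 0.
  apply/eqP; apply/negPn/negP => nz.
  have [p0 [Dp0 _] dv] := minCpolyP w.
  have : (p0 %| E)%R by rewrite -dv /root Ew.
  move/(dvdp_leq nz).
  have -> : size p0 = q.+1.
    rewrite -(size_map_poly (@ratr algC)) -Dp0 (minCpoly_cyclotomic prim_w).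
    by rewrite size_cyclotomic totient_pfactor.
  by rewrite ltnNge size_poly.
have hq : forall j, (j < p ^ k.+1)%N -> c j = c (j %% M + q)%N.
  move=> j hj; case: (ltnP j q) => hjq.
    have := congr1 (fun P : {poly rat} => P`_j) E0.
    by rewrite coef_poly hjq coef0 => /eqP; rewrite subr_eq0 eqr_nat => /eqP.
  have hi : (j - q < M)%N by rewrite ltn_subLR // -pM -em.
  have e : (j %% M = j - q)%N.
    by rewrite -{1}(subnK hjq) /q addnC modnMDl modn_small.
  by rewrite e subnK.
move=> j hj; rewrite hq // (hq (j %% M)%N); first by rewrite modn_mod.
by rewrite em (leq_trans (ltn_pmod _ M_gt0)) // leq_pmull.
Qed.

Lemma tile_struct (n : nat) (T : {set 'I_n}) (p k : nat) (w : algC) :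
  prime p -> (p ^ k.+1).-primitive_root w -> #|T| = p ->
  (exists2 t0, t0 \in T & val t0 = 0%N) ->
  \sum_(t in T) w ^+ val t = 0 ->
  (forall t, t \in T -> (p ^ k %| val t)%N) /\
  (forall t t', t \in T -> t' \in T -> (val t %% p ^ k.+1 = val t' %% p ^ k.+1)%N -> t = t').
Proof.
move=> pr_p prim_w cardT [t0 t0T t00] hsum.
set m := (p ^ k.+1)%N; set M := (p ^ k)%N.
have m_gt0 : (0 < m)%N by rewrite expn_gt0 prime_gt0.
have M_gt0 : (0 < M)%N by rewrite expn_gt0 prime_gt0.
have p_gt0 := prime_gt0 pr_p.
have em : m = (p * M)%N by rewrite /m expnS.
pose c j := #|[set t in T | (val t %% m == j)%N]|.
have L1 : forall x : algC, x ^+ m = 1 ->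
    \sum_(t in T) x ^+ val t = \sum_(0 <= j < m) (c j)%:R * x ^+ j.
  move=> x xm.
  rewrite (partition_big (fun t : 'I_n => Ordinal (ltn_pmod (val t) m_gt0)) predT) //=.
  rewrite big_mkord; apply: eq_bigr => j _.
  rewrite (eq_bigr (fun _ => x ^+ j)); last first.
    by move=> i /andP[_ /eqP <-] /=; rewrite expr_mod.
  rewrite (eq_bigl (fun i => i \in [set t in T | (val t %% m == j)%N])); last first.
    by move=> i; rewrite inE.
  by rewrite sumr_const mulr_natl.
have L2 : (\sum_(0 <= j < m) c j)%N = p.
  have := L1 1 (expr1n _ _).
  rewrite (eq_bigr (fun _ => 1)); last by move=> *; rewrite expr1n.
  rewrite (eq_bigr (fun j => (c j)%:R)); last by move=> *; rewrite expr1n mulr1.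
  by rewrite sumr_const -natr_sum cardT => /eqP; rewrite eqr_nat => /eqP.
have hc := @vanish p k c w pr_p prim_w (etrans (esym (L1 w (prim_expr_order prim_w))) hsum).
have L3 : (\sum_(0 <= r < M) c r)%N = 1%N.
  move: L2; rewrite em big_blocks.
  rewrite (eq_big_nat _ _ (F2 := fun _ => \sum_(0 <= r < M) c r)%N); last first.
    move=> l /andP[_ hl]; apply: eq_big_nat => r /andP[_ hr].
    rewrite hc; first by rewrite modnMDl modn_small.
    rewrite expnS -/M.
    apply: (@leq_trans (l.+1 * M)%N); first by rewrite mulSnr ltn_add2l.
    by rewrite leq_mul2r hl orbT.
  rewrite sum_nat_const_nat subn0 -{2}[p]muln1 => /eqP; rewrite eqn_pmul2l // => /eqP.
  done.
have c0 : (0 < c 0)%N.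
  by rewrite card_gt0; apply/set0Pn; exists t0; rewrite inE t0T t00 mod0n.
move: L3; rewrite big_ltn // => L3.
have c01 : c 0%N = 1%N by move: L3 c0; case: (c 0%N) => [|[|]] //.
have cr0 : forall r, (0 < r < M)%N -> c r = 0%N.
  move=> r /andP[r0 rM]; move: L3; rewrite c01 add1n => /eqP; rewrite eqSS => /eqP.
  move/eqP; rewrite sum_nat_seq_eq0 => /allP /(_ r); rewrite mem_index_iota r0 rM /=.
  by move=> /(_ isT) /eqP.
have key : forall t, t \in T -> c (val t %% m)%N = c (val t %% M)%N.
  move=> t tT; rewrite hc ?ltn_pmod // modn_dvdm //.
  by rewrite em dvdn_mull.
have cpos : forall t, t \in T -> (0 < c (val t %% m))%N.
  by move=> t tT; rewrite card_gt0; apply/set0Pn; exists t; rewrite inE tT eqxx.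
have divM : forall t, t \in T -> (M %| val t)%N.
  move=> t tT; rewrite /dvdn; apply/negPn/negP => h.
  have := cpos t tT; rewrite key // cr0 //.
  by rewrite lt0n h ltn_pmod.
split=> // t t' tT t'T e; apply/eqP; apply/negPn/negP => ne.
have : (2 <= c (val t %% m))%N.
  apply: (@leq_trans #|[set t; t']|); first by rewrite cards2 ne.
  apply: subset_leq_card; apply/subsetP => x.
  by rewrite !inE => /orP[] /eqP ->; rewrite ?tT ?t'T -?e eqxx.
rewrite key //. have := divM t tT; rewrite /dvdn => /eqP ->.
by rewrite c01.
Qed.
End Aux.
Section Zn.
Variable n' : nat.
Local Notation n := n'.+1.
Lemma valD (x y : 'I_n) : val (x + y)%R = ((val x + val y) %% n)%N.
Proof. by []. Qed.
Lemma valN (x : 'I_n) : val (- x)%R = ((n - val x) %% n)%N.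
Proof. by []. Qed.
Lemma val0 : val (0 : 'I_n)%R = 0%N.
Proof. by []. Qed.
Lemma zdiffE (u v : 'I_n) : zdiff v u = val (v - u)%R.
Proof. by rewrite /zdiff valD valN modnDmr. Qed.
Lemma adjE (S : {set 'I_n}) u v : circ_adj S u v = ((v - u)%R \in S).
Proof.
rewrite /circ_adj zdiffE; apply/existsP/idP => [[s /andP[sS /eqP e]]|h].
  by rewrite -(val_inj e).
by exists (v - u)%R; rewrite h eqxx.
Qed.
Lemma modpD (p : nat) (x y : 'I_n) : (p %| n)%N -> (val (x + y)%R %% p = (val x + val y) %% p)%N.
Proof. by move=> pn; rewrite valD modn_dvdm. Qed.
Lemma modpB (p : nat) (x y : 'I_n) : (p %| n)%N -> (val (y - x)%R %% p = (val y + (n - val x)) %% p)%N.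
Proof. by move=> pn; rewrite modpD // valN -modnDmr modn_dvdm // modnDmr. Qed.
End Zn.

Theorem theorem1p1 (n p : nat) (S : {set 'I_n}) :
  0 < n -> prime p -> odd p ->
  connection_set S -> #|S| = p.-1 -> circ_connected S ->
  (exists C : {set 'I_n}, perfect_code S C) <->
  (p %| n /\
   forall s s' : 'I_n, (val s == 0) || (s \in S) -> (val s' == 0) || (s' \in S) ->
     s != s' -> val s %% p != val s' %% p).
Proof.
move=> n_gt0 pr_p odd_p [S0 Sinv] cardS conn.
destruct n as [|n']; first by [].
have p_gt0 := prime_gt0 pr_p; have p_gt1 := prime_gt1 pr_p.
set T : {set 'I_n'.+1} := (0%R |: S).
have S0' : (0%R : 'I_n'.+1) \notin S.
  by apply/negP => h; have := S0 _ h; rewrite val0.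
have cardT : #|T| = p by rewrite cardsU1 S0' cardS add1n prednK.
have memT : forall s : 'I_n'.+1, ((val s == 0) || (s \in S)) = (s \in T).
  by move=> s; rewrite !inE.
have Sinv' : forall s, s \in S -> (- s)%R \in S.
  move=> s /Sinv [t tS e]; suff -> : (- s)%R = t by [].
  by apply: val_inj; rewrite valN e.
split.
- case=> C [Cind Cperf].
  have tile : forall g : 'I_n'.+1, exists x0 : 'I_n'.+1 * 'I_n'.+1, forall x,
      ((x.1 \in T) && (x.2 \in C) && (x.1 + x.2 == g)%R) = (x == x0).
    move=> g; case: (boolP (g \in C)) => gC.
      exists (0%R, g) => [[t c]] /=; apply/idP/eqP.
        case/andP => [/andP[tT cC] /eqP e].
        move: tT; rewrite !inE => /orP[/eqP t0 | tS].
          by move: e; rewrite t0 add0r => ->.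
        by have := Cind c g cC gC; rewrite adjE -e addrK tS.
      by case=> -> ->; rewrite !inE eqxx add0r gC eqxx.
    have := Cperf g gC; move/eqP/cards1P => [c0 h].
    have c0in : c0 \in [set c in C | circ_adj S g c] by rewrite h set11.
    move: c0in; rewrite inE adjE => /andP[c0C c0S].
    exists (g - c0, c0)%R => [[t c]] /=; apply/idP/eqP.
      case/andP => [/andP[tT cC] /eqP e].
      have cin : c \in [set c in C | circ_adj S g c].
        rewrite inE cC adjE -e.
        move: tT; rewrite !inE => /orP[/eqP t0|tS].
          by move: gC; rewrite -e t0 add0r cC.
        have -> : (c - (t + c) = - t)%R by rewrite opprD addrCA subrr addr0.
        exact: Sinv'.
      move: cin; rewrite h inE => /eqP ce; rewrite ce in e *. by rewrite -e addrK.
    case=> -> ->; rewrite subrK eqxx c0C !andbT.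
    by rewrite !inE -opprB Sinv' ?orbT.
  have tile_id : forall w : algC, (w ^+ n'.+1 = 1)%R ->
      ((\sum_(t in T) w ^+ val t) * (\sum_(c in C) w ^+ val c) =
       \sum_(g : 'I_n'.+1) w ^+ val g)%R.
    move=> w wn; rewrite mulr_suml.
    under eq_bigr do rewrite mulr_sumr.
    rewrite pair_big_dep /=.
    rewrite (partition_big (fun x : 'I_n'.+1 * 'I_n'.+1 => (x.1 + x.2)%R) predT) //=.
    apply: eq_bigr => g _; have [x0 hx0] := tile g.
    rewrite (big_pred1 x0); last by move=> x; rewrite /= -hx0.
    have := hx0 x0; rewrite eqxx => /andP[_ /eqP <-].
    by rewrite -exprD valD expr_mod.
  have sum1 : forall A : {set 'I_n'.+1}, (\sum_(a in A) (1:algC) ^+ val a = #|A|%:R)%R.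
    by move=> A; under eq_bigr do rewrite expr1n; rewrite sumr_const.
  have ncard : n'.+1 = (p * #|C|)%N.
    have e : (\sum_(g : 'I_n'.+1) (1:algC) ^+ val g = n'.+1%:R)%R.
      by under eq_bigr do rewrite expr1n; rewrite sumr_const card_ord.
    have := tile_id 1%R (expr1n _ _).
    by rewrite e !sum1 cardT -natrM => /eqP; rewrite eqr_nat => /eqP.
  have pn : p %| n'.+1 by rewrite ncard dvdn_mulr.
  set a := logn p n'.+1; set N := (p ^ a)%N.
  have N_gt0 : 0 < N by rewrite expn_gt0 p_gt0.
  have Ndn : N %| n'.+1 by rewrite pfactor_dvdn // leqnn.
  have [z prim_z] := C_prim_root_exists N_gt0.
  have zn : (z ^+ n'.+1 = 1)%R by apply/eqP; rewrite -(prim_order_dvd prim_z).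
  split; first exact: pn.
  have [hex|hne] := boolP [exists j : 'I_N, (0 < val j) && ((\sum_(t in T) (z ^+ val j) ^+ val t) == 0)%R].
  + move/existsP: hex => [j /andP[j0 /eqP hj]].
    set w := (z ^+ val j)%R in hj.
    have wN : (w ^+ N = 1)%R by rewrite /w exprAC (prim_expr_order prim_z) expr1n.
    have [m prim_w mN] := prim_order_exists N_gt0 wN.
    have [e _ me] := dvdn_pfactor _ _ pr_p mN.
    have w1 : w != 1%R by rewrite /w -(prim_order_dvd prim_z) (gtnNdvd j0 (ltn_ord j)).
    case: e me => [|k] me.
      move: prim_w; rewrite me expn0 => /prim_expr_order; rewrite expr1 => w1'.
      by rewrite w1' eqxx in w1.
    rewrite me in prim_w.
    have t0 : exists2 t0, t0 \in T & val t0 = 0 by exists 0%R; rewrite ?setU11.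
    have [hdiv hinj] := @tile_struct _ T p k w pr_p prim_w cardT t0 hj.
    case: k hdiv hinj me prim_w => [|k] hdiv hinj _ _.
      move=> s s' hs hs' ne; rewrite memT in hs; rewrite memT in hs'.
      apply/eqP => e; apply: (negP ne); apply/eqP; apply: hinj => //.
    exfalso.
    have pdiv : forall t, t \in T -> p %| val t.
      by move=> t /hdiv; apply: dvdn_trans; rewrite expnS dvdn_mulr.
    have n_gt1 : 1 < n'.+1 by apply: leq_trans p_gt1 (dvdn_leq _ pn).
    have cl : closed (circ_adj S) [pred x : 'I_n'.+1 | p %| val x].
      move=> x y; rewrite adjE => hS.
      have hd : p %| val y + (n'.+1 - val x).
        by have := pdiv _ (setU1r _ hS); rewrite /dvdn modpB.
      rewrite !inE /=; apply/idP/idP => h.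
        by move: hd; rewrite dvdn_addl // dvdn_sub.
      rewrite dvdn_addr // in hd.
        by rewrite -(subKn (ltnW (ltn_ord x))) dvdn_sub.
    have := closed_connect cl (conn 0%R (Ordinal n_gt1)).
    rewrite !inE /= dvdn0 dvdn1 => /esym /eqP p1.
    by rewrite p1 in p_gt1.
  + move: hne; rewrite negb_exists => /forallP hne.
    have hC : forall j : 'I_N, 0 < val j -> (\sum_(c in C) (z ^+ val j) ^+ val c = 0)%R.
      move=> j j0; have := hne j; rewrite j0 /= => hT.
      have w1 : (z ^+ val j != 1)%R by rewrite -(prim_order_dvd prim_z) (gtnNdvd j0 (ltn_ord j)).
      have wn : ((z ^+ val j) ^+ n'.+1 = 1)%R by rewrite exprAC zn expr1n.
      have := tile_id _ wn; rewrite (@geom0 _ _ _ wn w1) => /eqP.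
      by rewrite mulf_eq0 (negbTE hT) /= => /eqP.
    have s1 : (\sum_(j < N) \sum_(c in C) (z ^+ j) ^+ val c = #|C|%:R)%R.
      rewrite (bigD1 (Ordinal N_gt0)) //= [X in (_ + X)%R]big1 ?addr0.
        by rewrite -sum1; apply: eq_bigr => c _; rewrite expr0.
      move=> j hj; apply: hC; rewrite lt0n; apply: contra hj => /eqP h.
      by apply/eqP; apply: val_inj; rewrite /= h.
    have s2 : (\sum_(j < N) \sum_(c in C) (z ^+ j) ^+ val c =
               (\sum_(c in C) (if N %| val c then N else 0))%:R)%R.
      rewrite exchange_big natr_sum /=; apply: eq_bigr => c _.
      under eq_bigr do rewrite exprAC.
      case: ifP => h.
        have -> : (z ^+ val c = 1)%R by apply/eqP; rewrite -(prim_order_dvd prim_z).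
        by under eq_bigr do rewrite expr1n; rewrite sumr_const card_ord.
      apply: geom0; first by rewrite exprAC (prim_expr_order prim_z) expr1n.
      by rewrite -(prim_order_dvd prim_z) h.
    have : N %| #|C|.
      move: (etrans (esym s1) s2) => /eqP; rewrite eqr_nat => /eqP ->.
      by apply: dvdn_sum => c _; case: ifP.
    by rewrite -(@dvdn_pmul2l p) // -ncard -expnS pfactor_dvdn // ltnn.
- case=> pn hdist.
  exists [set c : 'I_n'.+1 | p %| val c]; split.
  + move=> c c'; rewrite !inE => hc hc'; rewrite adjE; apply/negP => hS.
    have ne : (c' - c)%R != 0%R.
      by apply/negP => /eqP e; have := S0 _ hS; rewrite e val0 eqxx.
    have := hdist (c' - c)%R 0%R; rewrite hS orbT val0 eqxx => /(_ isT isT ne).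
    rewrite modpB // mod0n.
    have : p %| val c' + (n'.+1 - val c) by rewrite dvdn_add // dvdn_sub.
    by rewrite /dvdn => /eqP ->; rewrite eqxx.
  + move=> g; rewrite inE => gC.
    pose f := fun t : 'I_n'.+1 => Ordinal (ltn_pmod (val t) p_gt0).
    have finj : {in T &, injective f}.
      move=> t t' tT t'T /(congr1 val) /= e; apply/eqP; apply/negPn/negP => ne.
      by have := hdist t t'; rewrite !memT => /(_ tT t'T ne); rewrite e eqxx.
    have fim : f @: T = setT.
      by apply/eqP; rewrite eqEcard subsetT /= cardsT card_ord (card_in_imset finj) cardT.
    have : Ordinal (ltn_pmod (p - val g %% p) p_gt0) \in f @: T by rewrite fim inE.
    case/imsetP => s sT /(congr1 val) /= es.
    have gp0 : 0 < val g %% p by rewrite lt0n.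
    have gpp : val g %% p < p by rewrite ltn_pmod.
    have sg : (val g + val s) %% p = 0.
      by rewrite -modnDmr -es modnDmr -modnDml subnKC ?modnn // ltnW.
    have sS : s \in S.
      move: sT; rewrite !inE => /orP[/eqP s0|] //; exfalso.
      move: es; rewrite s0 val0 mod0n modn_small; last by rewrite ltn_subrL gp0 p_gt0.
      by move/eqP; rewrite subn_eq0 leqNgt gpp.
    apply/eqP/cards1P; exists (g + s)%R; apply/setP => c; rewrite !inE adjE.
    apply/andP/eqP => [[hc hcs]|->].
      have h := hdist (c - g)%R s; rewrite hcs sS !orbT in h.
      have e : (c - g)%R = s.
        apply/eqP; apply/negPn/negP => /(h isT isT) /negP; apply.
        rewrite -(eqn_modDl (val g)) sg -modpD // addrC subrK.
        by move: hc; rewrite /dvdn.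
      by rewrite -e addrC subrK.
    by rewrite /dvdn modpD // sg eqxx /= [(g + s)%R]addrC addrK sS.
Qed.
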